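(* Let $G$ be the graph with vertex set $\{1,\dots,12\}$ and edge set consisting of $12,23,34$; $87,76,65$; $12\text{-}11, 11\text{-}10, 10\text{-}9$; $12\text{-}8, 8\text{-}11, 11\text{-}6, 6\text{-}9, 9\text{-}5, 5\text{-}10, 10\text{-}7, 7\text{-}12$; $17, 73, 35$; $82, 26, 64$; $27$; $36$; and all eight edges between $\{2,3\}$ and $\{9,10,11,12\}$. Then: $G$ is prime, $\{P_5,\overline{P_5},C_5\}$-free and not a split graph; $G$ is isomorphic to $\overline{G}$ via the map $1\mapsto3,2\mapsto1,3\mapsto4,4\mapsto2,5\mapsto7,6\mapsto5,7\mapsto8,8\mapsto6,9\mapsto11,10\mapsto9,11\mapsto12,12\mapsto10$; the simplicial vertices of $G$ are exactly $1,4$ and the antisimplicial vertices of $G$ are exactly $2,3$; and there is no $F\in\{G,\overline{G}\}$ with an induced subgraph of $F$ isomorphic to $H_6$ whose two degree-one vertices are simplicial in $F$ and whose two degree-three vertices are both antisimplicial in $F$.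
   Context: All graphs are finite and simple; in the edge list ''$a\text{-}b$'' or ''$ab$'' denotes an edge between vertices $a$ and $b$. $P_n$ is the path on $n$ vertices, $C_n$ the cycle of length $n$, $\overline{G}$ the complement. $G$ is $H$-free if it has no induced subgraph isomorphic to $H$. A vertex $b\notin X$ is mixed on $X$ if it has both a neighbor and a non-neighbor in $X$. A homogeneous set is a set $X\subseteq V(G)$ with $1<|X|<|V(G)|$ such that no vertex outside $X$ is mixed on $X$. $G$ is prime if $|V(G)|\ge4$ and has no homogeneous set. A vertex $v$ is simplicial if $N(v)$ is a clique, antisimplicial if $V(G)\setminus N(v)$ is a stable set. A split graph is one whose vertex set can be partitioned into a stable set and a clique. $H_6$ is the graph with vertex set $\{v_1,\dots,v_6\}$ and edge set $\{v_1v_2,v_2v_3,v_3v_4,v_2v_5,v_3v_6,v_5v_6\}$. *)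

(* Defs.v *)
From mathcomp Require Import all_boot.
Set Implicit Arguments. Unset Strict Implicit. Unset Printing Implicit Defensive.

(* A finite simple graph: a symmetric irreflexive relation on a finType. *)
Section Graphs.
Variable T : finType.
Implicit Types (e : rel T) (X S K : {set T}).

Definition complement e : rel T := fun x y => (x != y) && ~~ e x y.

Definition mixed e (b : T) X : Prop :=
  b \notin X /\ (exists2 x, x \in X & e b x) /\ (exists2 y, y \in X & ~~ e b y).

Definition homogeneous e X : Prop :=
  1 < #|X| < #|T| /\ forall b, b \notin X -> ~ mixed e b X.

Definition prime_graph e : Prop :=
  4 <= #|T| /\ forall X : {set T}, ~ homogeneous e X.

Definition clique e X : Prop := forall x y, x \in X -> y \in X -> x != y -> e x y.
Definition stable e X : Prop := forall x y, x \in X -> y \in X -> ~~ e x y.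

Definition nbhd e (v : T) : {set T} := [set y | e v y].

Definition simplicial e v : Prop := clique e (nbhd e v).
Definition antisimplicial e v : Prop := stable e (~: nbhd e v).

Definition split_graph e : Prop :=
  exists S K : {set T}, [/\ S :&: K = set0, S :|: K = setT, stable e S & clique e K].
End Graphs.

Definition induced_embedding (U T : finType) (eH : rel U) (e : rel T) (f : U -> T) : Prop :=
  injective f /\ forall x y, eH x y = e (f x) (f y).

Definition has_induced (U T : finType) (eH : rel U) (e : rel T) : Prop :=
  exists f : U -> T, induced_embedding eH e f.

Definition H_free (U T : finType) (eH : rel U) (e : rel T) : Prop := ~ has_induced eH e.

Definition deg (T : finType) (e : rel T) (v : T) : nat := #|[set y | e v y]|.

(* Graph from an edge list over labels 1..n, vertex i : 'I_n has label i+1 *)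
Definition rel_of_edges (n : nat) (E : seq (nat * nat)) : rel 'I_n :=
  fun x y => ((x.+1, y.+1) \in E) || ((y.+1, x.+1) \in E).

Definition P5 : rel 'I_5 := rel_of_edges [:: (1,2); (2,3); (3,4); (4,5)].
Definition C5 : rel 'I_5 := rel_of_edges [:: (1,2); (2,3); (3,4); (4,5); (5,1)].
Definition H6 : rel 'I_6 :=
  rel_of_edges [:: (1,2); (2,3); (3,4); (2,5); (3,6); (5,6)].

Definition G_edges : seq (nat * nat) :=
  [:: (1,2); (2,3); (3,4);
      (8,7); (7,6); (6,5);
      (12,11); (11,10); (10,9);
      (12,8); (8,11); (11,6); (6,9); (9,5); (5,10); (10,7); (7,12);
      (1,7); (7,3); (3,5);
      (8,2); (2,6); (6,4);
      (2,7);
      (3,6);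
      (2,9); (2,10); (2,11); (2,12); (3,9); (3,10); (3,11); (3,12)].

Definition G : rel 'I_12 := rel_of_edges G_edges.

Definition sigma_table : seq nat := [:: 3; 1; 4; 2; 7; 5; 8; 6; 11; 9; 12; 10].
Definition sigma (x : 'I_12) : 'I_12 := inord (nth 1 sigma_table x).-1.

Definition vtx (k : nat) : 'I_12 := inord k.-1.

(* Main.v *)
Require Import Defs.
From mathcomp Require Import all_boot.
From mathcomp Require Import zify.
From Stdlib Require Import FunctionalExtensionality.
Set Implicit Arguments. Unset Strict Implicit. Unset Printing Implicit Defensive.

Definition ordn (n k : nat) : 'I_n.+1 := Ordinal (ltn_pmod k (ltn0Sn n)).
Lemma ordnK n k : k < n.+1 -> val (ordn n k) = k.
Proof. by move=> h; rewrite /= modn_small. Qed.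
Definition ordl (n : nat) : seq 'I_n.+1 := map (ordn n) (iota 0 n.+1).
Lemma mem_ordl n (x : 'I_n.+1) : x \in ordl n.
Proof.
apply/mapP; exists (val x); first by rewrite mem_iota ltn_ord.
by apply: val_inj; rewrite ordnK ?ltn_ord.
Qed.
Lemma uniq_ordl n : uniq (ordl n).
Proof.
rewrite map_inj_in_uniq ?iota_uniq // => i j; rewrite !mem_iota !add0n => /andP[_ hi] /andP[_ hj].
by move/(congr1 (@nat_of_ord _)); rewrite !ordnK.
Qed.
Lemma perm_ordl n : perm_eq (ordl n) (enum 'I_n.+1).
Proof. by apply: uniq_perm; rewrite ?uniq_ordl ?enum_uniq // => x; rewrite mem_ordl mem_enum. Qed.
Lemma nth_ordl n (x : 'I_n.+1) x0 : nth x0 (ordl n) x = x.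
Proof. by apply: val_inj; rewrite (nth_map 0) ?size_iota ?ltn_ord // nth_iota ?ltn_ord // ordnK ?ltn_ord. Qed.

Definition eqn_ord k (x y : 'I_k) := eqn x y.

Section Search.
Variables (T : finType) (L : seq T) (n : nat) (eH : rel 'I_n.+1) (tab : seq (seq bool)) (e : rel T) (P : nat -> T -> bool) (eqb : rel T).
Hypothesis memL : forall x, x \in L.
Hypothesis eqbP : forall x y, eqb x y -> x = y.
Hypothesis tabOK : forall i j : 'I_n.+1, nth false (nth [::] tab i) j = eH i j.
Definition eHn i j := nth false (nth [::] tab i) j.
Definition step (s : seq T) (v : T) :=
  [&& ~~ has (eqb v) s, P (size s) v &
   all (fun i => (eHn i (size s) == e (nth v s i) v) && (eHn (size s) i == e v (nth v s i)))
       (iota 0 (size s))].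
Fixpoint search (s : seq T) (k : nat) : bool :=
  match k with 0 => true | k'.+1 => has (fun v => if step s v then search (rcons s v) k' else false) L end.

Lemma search_sound (f : 'I_n.+1 -> T) : injective f -> (forall x y, eH x y = e (f x) (f y)) ->
  (forall i : 'I_n.+1, P i (f i)) -> search [::] n.+1.
Proof.
move=> injf emb Pf.
pose fn i := f (ordn n i).
pose s k := map fn (iota 0 k).
have key: forall j, j <= n.+1 -> search (s (n.+1 - j)) j.
  elim=> [//|j IH] hj /=.
  set k := n.+1 - j.+1.
  have hk : k < n.+1 by rewrite /k; lia.
  have hk1 : k.+1 = n.+1 - j by rewrite /k; lia.
  apply/hasP; exists (fn k); first exact: memL.
  have -> : step (s k) (fn k).
  { rewrite /step size_map size_iota; apply/and3P; split.
  - apply/negP => /hasP [w /mapP [i]]; rewrite mem_iota add0n => /andP[_ hi] -> /eqbP /injf /(congr1 (@nat_of_ord _)).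
    rewrite !ordnK; lia.
  - by have := Pf (ordn n k); rewrite ordnK.
  - apply/allP => i; rewrite mem_iota add0n => /andP[_ hi].
    have hi' : i < n.+1 by lia.
    have := tabOK (ordn n i) (ordn n k); have := tabOK (ordn n k) (ordn n i); rewrite !ordnK // /eHn => -> ->.
    by rewrite (nth_map 0) ?size_iota // nth_iota // add0n !emb !eqxx. }
  have -> : rcons (s k) (fn k) = s k.+1 by rewrite /s -addn1 iotaD map_cat cats1.
  rewrite hk1; apply IH; lia.
have := key n.+1 (leqnn _); by rewrite subnn.
Qed.
End Search.

Lemma cardc (T : finType) (A : {set T}) : #|A| = count (mem A) (enum T).
Proof. rewrite cardE /enum_mem size_filter count_filter; apply: eq_count => x; by rewrite /= ?andbT. Qed.
Lemma cardc2 (T : finType) (p : pred T) : #|[set y | p y]| = count p (enum T).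
Proof. by rewrite cardc; apply: eq_count => x; rewrite /= inE. Qed.
Lemma countl n (p : pred 'I_n.+1) : count p (enum 'I_n.+1) = count p (ordl n).
Proof. by apply/esym/permP; exact: perm_ordl. Qed.

Definition mktab n (eH : rel 'I_n.+1) := [seq [seq eH x y | y <- ordl n] | x <- ordl n].
Lemma mktabOK n (eH : rel 'I_n.+1) (i j : 'I_n.+1) : nth false (nth [::] (mktab eH) i) j = eH i j.
Proof.
rewrite (nth_map i) ?size_map ?size_iota ?ltn_ord // nth_ordl.
by rewrite (nth_map i) ?size_map ?size_iota ?ltn_ord // nth_ordl.
Qed.

Lemma eqnO k (x y : 'I_k) : eqn x y = (x == y).
Proof. by apply/eqnP/eqP => [/ord_inj|->]. Qed.
Lemma eqnOP k (x y : 'I_k) : eqn x y -> x = y.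
Proof. by rewrite eqnO => /eqP. Qed.

Section Refl.
Variable n : nat.
Notation T := 'I_n.+1.
Implicit Types (e : rel T) (X : {set T}).
Definition allT (p : pred T) := all p (ordl n).
Lemma allTP (p : pred T) : reflect (forall x, p x) (allT p).
Proof. by apply: (iffP allP) => H x; [apply: H; rewrite mem_ordl | ]. Qed.
Definition simplb e v := allT (fun x => allT (fun y => (e v x && e v y && ~~ eqn x y) ==> e x y)).
Definition antisimplb e v := allT (fun x => allT (fun y => (~~ e v x && ~~ e v y) ==> ~~ e x y)).
Lemma simplP e v : reflect (simplicial e v) (simplb e v).
Proof.
apply: (iffP idP) => [/allTP H x y hx hy hxy | H].
  move: hx hy; rewrite !inE => hx hy.
  by have /allTP/(_ y) := H x; rewrite hx hy eqnO hxy.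
apply/allTP=> x; apply/allTP=> y; apply/implyP=> /andP[/andP[hx hy] hxy]; apply: H; by rewrite ?inE -?eqnO.
Qed.
Lemma antisimplP e v : reflect (antisimplicial e v) (antisimplb e v).
Proof.
apply: (iffP idP) => [/allTP H x y hx hy | H].
  move: hx hy; rewrite !inE => hx hy.
  by have /allTP/(_ y) := H x; rewrite hx hy.
apply/allTP=> x; apply/allTP=> y; apply/implyP=> /andP[hx hy]; apply: H => //; by rewrite !inE.
Qed.
End Refl.

Fixpoint allbits (k : nat) : seq (seq bool) :=
  if k is k'.+1 then let X := allbits k' in map (cons true) X ++ map (cons false) X else [:: [::]].
Lemma allbits_ok k s : size s = k -> s \in allbits k.
Proof.
elim: k s => [|k IH] [|b s] //= [hs].
by rewrite mem_cat; case: b; rewrite ?mem_map ?IH ?orbT //; move=> x y [].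
Qed.

Notation L12 := (ordl 11).
Definition memb (s : seq bool) (x : 'I_12) := nth false s x.
Definition mixedb e s (b : 'I_12) :=
  has (fun x => memb s x && e b x) L12 && has (fun y => memb s y && ~~ e b y) L12.
Definition primeb e := all (fun s => ~~ ((1 < count id s < 12) &&
   all (fun b => ~~ memb s b ==> ~~ mixedb e s b) L12)) (allbits 12).
Definition splitb e := has (fun s =>
   all (fun x => all (fun y => (memb s x && memb s y) ==> ~~ e x y) L12) L12 &&
   all (fun x => all (fun y => (~~ memb s x && ~~ memb s y && ~~ eqn x y) ==> e x y) L12) L12)
   (allbits 12).

Lemma membX (X : {set 'I_12}) x : memb [seq x \in X | x <- L12] x = (x \in X).
Proof. by rewrite /memb (nth_map x) ?size_map ?size_iota ?ltn_ord // nth_ordl. Qed.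
Lemma sizeX (X : {set 'I_12}) : size [seq x \in X | x <- L12] = 12.
Proof. by rewrite !size_map size_iota. Qed.

Lemma primeb_ok e : primeb e -> forall X, ~ homogeneous e X.
Proof.
move=> /allP H X [hc hm].
have := H _ (allbits_ok (sizeX X)).
rewrite count_map -countl -cardc card_ord in hc *. rewrite hc andTb; move/negP; apply.
apply/allP => b _; apply/implyP; rewrite membX => hb; apply/negP => hmb; apply: (hm b hb).
move: hmb => /andP[/hasP[x _ /andP[hx ex]] /hasP[y _ /andP[hy ey]]].
move: hx hy; rewrite !membX => hx hy.
split; [done|split]; by [exists x|exists y].
Qed.
Lemma split_ok e : split_graph e -> splitb e.
Proof.
move=> [S [K [hI hU hS hK]]]. apply/hasP; exists [seq x \in S | x <- L12].
  exact: allbits_ok (sizeX S).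
have hK' : forall x, (x \in K) = (x \notin S).
  move=> x; move/setP/(_ x): hI; move/setP/(_ x): hU; rewrite !inE.
  by case: (x \in S); case: (x \in K).
apply/andP; split; apply/allP => x _; apply/allP => y _; rewrite !membX; apply/implyP.
  by move=> /andP[hx hy]; apply: hS.
by move=> /andP[/andP[hx hy] hxy]; apply: hK; rewrite ?hK' -?eqnO.
Qed.

Definition degc (x : 'I_6) := count (H6 x) (ordl 5).
Lemma degE x : deg H6 x = degc x.
Proof. by rewrite /deg cardc2 countl. Qed.

Definition o12 := ordn 11.
Lemma vtxE k : 0 < k <= 12 -> vtx k = o12 k.-1.
Proof. by move=> h; apply: ord_inj; rewrite /vtx inordK ?ordnK //; lia. Qed.
Definition sigma' (x : 'I_12) : 'I_12 := o12 (nth 1 sigma_table x).-1.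
Lemma sig_tab1 : all (fun x : 'I_12 => (nth 1 sigma_table x).-1 < 12) L12 = true.
Proof. vm_compute. reflexivity. Qed.
Lemma sigmaE x : sigma x = sigma' x.
Proof.
have h := allP sig_tab1 x (mem_ordl x).
by apply: ord_inj; rewrite /sigma /sigma' inordK // ordnK.
Qed.
Definition sinv_table : seq nat := [:: 2; 4; 1; 3; 6; 8; 5; 7; 10; 12; 9; 11].
Definition sinv (x : 'I_12) : 'I_12 := o12 (nth 1 sinv_table x).-1.
Lemma sinv_tab : allT (fun x => eqn (sinv (sigma' x)) x && eqn (sigma' (sinv x)) x) = true.
Proof. vm_compute. reflexivity. Qed.

Definition Gtab : seq (seq bool) :=
  [:: [:: false; true; false; false; false; false; true; false; false; false; false; false];
   [:: true; false; true; false; false; true; true; true; true; true; true; true];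
   [:: false; true; false; true; true; true; true; false; true; true; true; true];
   [:: false; false; true; false; false; true; false; false; false; false; false; false];
   [:: false; false; true; false; false; true; false; false; true; true; false; false];
   [:: false; true; true; true; true; false; true; false; true; false; true; false];
   [:: true; true; true; false; false; true; false; true; false; true; false; true];
   [:: false; true; false; false; false; false; true; false; false; false; true; true];
   [:: false; true; true; false; true; true; false; false; false; true; false; false];
   [:: false; true; true; false; true; false; true; false; true; false; true; false];
   [:: false; true; true; false; false; true; false; true; false; true; false; true];
   [:: false; true; true; false; false; false; true; true; false; false; true; false]].
Definition G' (x y : 'I_12) := nth false (nth [::] Gtab x) y.
Lemma G'_tab : allT (fun x => allT (fun y => G x y == G' x y)) = true.
Proof. vm_compute. reflexivity. Qed.
Lemma GE : G = G'.
Proof.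
apply: functional_extensionality => x; apply: functional_extensionality => y.
by have /allTP/(_ x)/allTP/(_ y)/eqP := G'_tab.
Qed.

Lemma simpl_tab : allT (fun v => simplb G' v == (eqn v 0 || eqn v 3)) = true.
Proof. vm_compute. reflexivity. Qed.
Lemma anti_tab : allT (fun v => antisimplb G' v == (eqn v 1 || eqn v 2)) = true.
Proof. vm_compute. reflexivity. Qed.
Lemma sigma_tab : allT (fun x => allT (fun y => G' x y == complement G' (sigma' x) (sigma' y))) = true.
Proof. vm_compute. reflexivity. Qed.
Lemma prime_tab : primeb G' = true.
Proof. vm_compute. reflexivity. Qed.
Lemma split_tab : splitb G' = false.
Proof. vm_compute. reflexivity. Qed.
Lemma P5_tab : search L12 (mktab P5) G' (fun _ _ => true) (@eqn_ord 12) [::] 5 = false.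
Proof. vm_compute. reflexivity. Qed.
Lemma cP5_tab : search L12 (mktab (complement P5)) G' (fun _ _ => true) (@eqn_ord 12) [::] 5 = false.
Proof. vm_compute. reflexivity. Qed.
Lemma C5_tab : search L12 (mktab C5) G' (fun _ _ => true) (@eqn_ord 12) [::] 5 = false.
Proof. vm_compute. reflexivity. Qed.
Definition PH (F : rel 'I_12) (i : nat) v := if eqn i 0 || eqn i 3 then simplb F v else if eqn i 1 || eqn i 2 then antisimplb F v else true.
Lemma deg_tab : allT (fun x : 'I_6 => ((eqn x 0 || eqn x 3) ==> (degc x == 1)) && ((eqn x 1 || eqn x 2) ==> (degc x == 3))) = true.
Proof. vm_compute. reflexivity. Qed.
Definition cG' (x y : 'I_12) := ~~ eqn x y && ~~ G' x y.
Lemma cGE : complement G' = cG'.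
Proof.
apply: functional_extensionality => x; apply: functional_extensionality => y.
by rewrite /complement /cG' eqnO.
Qed.
Lemma H6_tab1 : search L12 (mktab H6) G' (PH G') (@eqn_ord 12) [::] 6 = false.
Proof. vm_compute. reflexivity. Qed.
Lemma H6_tab2 : search L12 (mktab H6) cG' (PH cG') (@eqn_ord 12) [::] 6 = false.
Proof. vm_compute. reflexivity. Qed.

Theorem mainTheorem19 :
  [/\ prime_graph G,
      H_free P5 G /\ H_free (complement P5) G /\ H_free C5 G,
      ~ split_graph G /\
      bijective sigma /\ (forall x y : 'I_12, G x y = complement G (sigma x) (sigma y)),
      (forall v : 'I_12, simplicial G v <-> (v = vtx 1 \/ v = vtx 4))
        /\ (forall v : 'I_12, antisimplicial G v <-> (v = vtx 2 \/ v = vtx 3))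
    & forall F : rel 'I_12, (F = G \/ F = complement G) ->
        ~ exists f : 'I_6 -> 'I_12,
            [/\ induced_embedding H6 F f,
                (forall x, deg H6 x = 1 -> simplicial F (f x))
              & (forall x, deg H6 x = 3 -> antisimplicial F (f x))]].
Proof.
rewrite GE.
have sE := sigmaE.
split.
- split; first by rewrite card_ord.
  exact: primeb_ok prime_tab.
- split; [|split]; move=> [f [injf emb]].
  + have := search_sound (L:=L12) (tab:=mktab P5) (P:=fun _ _ => true) (eqb:=@eqn_ord 12)
      (@mem_ordl 11) (fun x y (h : eqn_ord x y) => eqnOP h) (@mktabOK 4 P5) injf emb (fun _ => isT).
    by rewrite P5_tab.
  + have := search_sound (L:=L12) (tab:=mktab (complement P5)) (P:=fun _ _ => true) (eqb:=@eqn_ord 12)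
      (@mem_ordl 11) (fun x y (h : eqn_ord x y) => eqnOP h) (@mktabOK 4 (complement P5)) injf emb (fun _ => isT).
    by rewrite cP5_tab.
  + have := search_sound (L:=L12) (tab:=mktab C5) (P:=fun _ _ => true) (eqb:=@eqn_ord 12)
      (@mem_ordl 11) (fun x y (h : eqn_ord x y) => eqnOP h) (@mktabOK 4 C5) injf emb (fun _ => isT).
    by rewrite C5_tab.
- split; first by move/split_ok; rewrite split_tab.
  split.
    exists sinv => x; rewrite sE.
      by have /allTP/(_ x)/andP[/eqnOP] := sinv_tab.
    by have /allTP/(_ x)/andP[_ /eqnOP] := sinv_tab.
  by move=> x y; rewrite !sE; have /allTP/(_ x)/allTP/(_ y)/eqP := sigma_tab.
- split=> v.
  + rewrite !vtxE //. have /allTP/(_ v)/eqP := simpl_tab => H.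
    split; first by move/simplP; rewrite H => /orP[] /eqnP hv; [left|right]; apply: ord_inj; rewrite hv ordnK.
    by move=> hv; apply/simplP; rewrite H; case: hv => ->; rewrite ordnK.
  + rewrite !vtxE //. have /allTP/(_ v)/eqP := anti_tab => H.
    split; first by move/antisimplP; rewrite H => /orP[] /eqnP hv; [left|right]; apply: ord_inj; rewrite hv ordnK.
    by move=> hv; apply/antisimplP; rewrite H; case: hv => ->; rewrite ordnK.
- move=> F hF [f [[injf emb] hs ha]].
  have hP : forall i : 'I_6, PH F i (f i).
    move=> i; have /allTP/(_ i)/andP[d1 d3] := deg_tab.
    rewrite /PH; case: ifP => h1.
      by apply/simplP; apply: hs; rewrite degE; move: d1; rewrite h1 => /eqP.
    case: ifP => h2 //.
    by apply/antisimplP; apply: ha; rewrite degE; move: d3; rewrite h2 => /eqP.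
  case: hF => ?; subst F.
    have := search_sound (L:=L12) (tab:=mktab H6) (P:=PH G') (eqb:=@eqn_ord 12)
      (@mem_ordl 11) (fun x y (h : eqn_ord x y) => eqnOP h) (@mktabOK 5 H6) injf emb hP.
    by rewrite H6_tab1.
  move: emb hP; rewrite cGE => emb hP.
  have := search_sound (L:=L12) (tab:=mktab H6) (P:=PH cG') (eqb:=@eqn_ord 12)
    (@mem_ordl 11) (fun x y (h : eqn_ord x y) => eqnOP h) (@mktabOK 5 H6) injf emb hP.
  by rewrite H6_tab2.
Qed.
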